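(* Let $\mathcal{H}^S$ and $\mathcal{H}^A$ be $d$-dimensional Hilbert spaces with fixed orthonormal bases $\{|i\rangle\}_{i=0}^{d-1}$, let $|0\rangle^A$ be the first basis vector of $\mathcal{H}^A$, and equip $\mathcal{H}^S\otimes\mathcal{H}^A$ with the product basis. For every state $\rho^S$ on $\mathcal{H}^S$ and every incoherent operation $\Lambda^{SA}$ on $\mathcal{H}^S\otimes\mathcal{H}^A$, \[ \mathcal{L}_C(\rho^S)\ge\mathcal{L}_E\big(\Lambda^{SA}(\rho^S\otimes|0\rangle^A\langle 0|)\big). \]
   Context: A state is incoherent if it is diagonal in the fixed basis. An incoherent operation is a completely positive trace-preserving map $\Lambda(\rho)=\sum_nK_n\rho K_n^\dagger$ with $\sum_nK_n^\dagger K_n=I$ where each $K_n$ maps diagonal (incoherent) operators to diagonal operators under $\delta\mapsto K_n\delta K_n^\dagger$; for $\mathcal{H}^S\otimes\mathcal{H}^A$ the fixed basis is $\{|i\rangle\otimes|j\rangle\}$. The coherence rank $R_C(|\psi\rangle)$ of a pure state is the number of nonzero coefficients in the fixed basis; $\mathcal{L}_C(|\psi\rangle)=\log_2R_C(|\psi\rangle)$; for a state $\rho$, $\mathcal{L}_C(\rho)=\min\sum_ip_i\mathcal{L}_C(|\psi_i\rangle)$ over all pure-state decompositions $\rho=\sum_ip_i|\psi_i\rangle\langle\psi_i|$. For a bipartite pure state $|\psi^{SA}\rangle$ with Schmidt rank $r$, $\mathcal{L}_E(|\psi^{SA}\rangle)=\log_2 r$, and for a bipartite state $\rho^{SA}$,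 $\mathcal{L}_E(\rho^{SA})=\min\sum_ip_i\mathcal{L}_E(|\psi_i^{SA}\rangle)$ over all pure-state decompositions $\rho^{SA}=\sum_ip_i|\psi_i^{SA}\rangle\langle\psi_i^{SA}|$. *)

(* Defs.v *)
From HB Require Import structures.
From mathcomp Require Import all_boot all_order all_algebra.
From mathcomp Require Import complex mxtens.
From mathcomp Require Import classical_sets reals exp.
Set Implicit Arguments.
Unset Strict Implicit.
Unset Printing Implicit Defensive.
Import Order.TTheory GRing.Theory Num.Theory.
Local Open Scope ring_scope.
Local Open Scope complex_scope.

Section QDefs.
Variable R : realType.
Local Notation C := R[i].

Definition adjmx m n (A : 'M[C]_(m, n)) : 'M[C]_(n, m) :=
  (map_mx (fun z : C => z^*) A)^T.

Definition is_state n (rho : 'M[C]_n) : Prop :=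
  [/\ adjmx rho = rho,
      (forall x : 'cV[C]_n, 0 <= (adjmx x *m rho *m x) 0 0)
    & \tr rho = 1].

Definition unit_vec n (psi : 'cV[C]_n) : Prop := (adjmx psi *m psi) 0 0 = 1.

Definition proj n (psi : 'cV[C]_n) : 'M[C]_n := psi *m adjmx psi.

Definition pure_decomp n (rho : 'M[C]_n) k (p : 'I_k -> R)
  (psi : 'I_k -> 'cV[C]_n) : Prop :=
  [/\ forall i, 0 <= p i,
      \sum_(i < k) p i = 1,
      forall i, unit_vec (psi i)
    & rho = \sum_(i < k) (p i)%:C *: proj (psi i)].

Definition log2 (r : nat) : R := ln (r%:R) / ln 2.

Definition coh_rank n (psi : 'cV[C]_n) : nat := #|[set i | psi i 0 != 0]|.

Definition LC_pure n (psi : 'cV[C]_n) : R := log2 (coh_rank psi).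

Definition LC n (rho : 'M[C]_n) : R :=
  inf [set x : R | exists k (p : 'I_k -> R) (psi : 'I_k -> 'cV[C]_n),
         pure_decomp rho p psi /\ x = \sum_(i < k) p i * LC_pure (psi i)].

(* bipartite space H^S (dim m) (x) H^A (dim n), product basis |i>(x)|j>
   indexed by mxtens_index (i, j) (the index used by the Kronecker product *t). *)
Definition coef_mx m n (psi : 'cV[C]_(m * n)) : 'M[C]_(m, n) :=
  \matrix_(i, j) psi (mxtens_index (i, j)) 0.

Definition schmidt_rank m n (psi : 'cV[C]_(m * n)) : nat := \rank (coef_mx psi).

Definition LE_pure m n (psi : 'cV[C]_(m * n)) : R := log2 (schmidt_rank psi).

Definition LE m n (rho : 'M[C]_(m * n)) : R :=
  inf [set x : R | exists k (p : 'I_k -> R) (psi : 'I_k -> 'cV[C]_(m * n)),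
         pure_decomp rho p psi /\ x = \sum_(i < k) p i * LE_pure (psi i)].

Definition incoherent_op N k (K : 'I_k -> 'M[C]_N) : Prop :=
  (\sum_(i < k) adjmx (K i) *m K i = 1%:M) /\
  (forall i (delta : 'M[C]_N), is_diag_mx delta ->
      is_diag_mx (K i *m delta *m adjmx (K i))).

Definition apply_op N k (K : 'I_k -> 'M[C]_N) (rho : 'M[C]_N) : 'M[C]_N :=
  \sum_(i < k) K i *m rho *m adjmx (K i).

Definition ket0 d (hd : (0 < d)%N) : 'cV[C]_d := delta_mx (Ordinal hd) 0.

End QDefs.

(* Main.v *)
Require Import Defs.
From HB Require Import structures.
From mathcomp Require Import all_boot all_order all_algebra.
From mathcomp Require Import complex mxtens.
From mathcomp Require Import classical_sets reals exp.
From mathcomp Require Import sesquilinear spectral.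
From mathcomp Require Import ring.
Set Implicit Arguments.
Unset Strict Implicit.
Unset Printing Implicit Defensive.
Import Order.TTheory GRing.Theory Num.Theory.
Local Open Scope ring_scope.

Section Aux.
Variable R : realType.
Local Notation C := R[i].
Local Notation "x %:C" := (real_complex R x) (at level 1).

Lemma adjE m n (A : 'M[C]_(m, n)) i j : adjmx A i j = (A j i)^*.
Proof. by rewrite !mxE. Qed.

Lemma adjmxK m n (A : 'M[C]_(m, n)) : adjmx (adjmx A) = A.
Proof. by apply/matrixP => i j; rewrite !adjE conjCK. Qed.

Lemma adjmxM m n p (A : 'M[C]_(m, n)) (B : 'M[C]_(n, p)) :
  adjmx (A *m B) = adjmx B *m adjmx A.
Proof.
apply/matrixP => i j; rewrite adjE !mxE rmorph_sum; apply: eq_bigr => l _.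
by rewrite !adjE rmorphM mulrC.
Qed.

Lemma adjmxZ m n a (A : 'M[C]_(m, n)) : adjmx (a *: A) = a^* *: adjmx A.
Proof. by apply/matrixP => i j; rewrite !mxE rmorphM. Qed.

Lemma adjmxD m n (A B : 'M[C]_(m, n)) : adjmx (A + B) = adjmx A + adjmx B.
Proof. by apply/matrixP => i j; rewrite !mxE rmorphD. Qed.

Lemma adjmx_sum m n I (r : seq I) (P : pred I) (F : I -> 'M[C]_(m, n)) :
  adjmx (\sum_(i <- r | P i) F i) = \sum_(i <- r | P i) adjmx (F i).
Proof.
apply/matrixP => i j; rewrite adjE !summxE rmorph_sum; apply: eq_bigr => l _.
by rewrite adjE.
Qed.

Definition sqn n (v : 'cV[C]_n) : C := (adjmx v *m v) 0 0.

Lemma sqnE n (v : 'cV[C]_n) : sqn v = \sum_j (v j 0)^* * v j 0.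
Proof. by rewrite /sqn mxE; apply: eq_bigr => j _; rewrite adjE. Qed.

Lemma sqn_ge0 n (v : 'cV[C]_n) : 0 <= sqn v.
Proof. by rewrite sqnE sumr_ge0 // => j _; rewrite mulrC mul_conjC_ge0. Qed.

Lemma sqn_eq0 n (v : 'cV[C]_n) : sqn v = 0 -> v = 0.
Proof.
rewrite sqnE => /psumr_eq0P H; apply/matrixP => j l; rewrite ord1 mxE.
apply/eqP; rewrite -mul_conjC_eq0 mulrC H //.
by move=> i _; rewrite mulrC mul_conjC_ge0.
Qed.

Lemma sqnZ n a (v : 'cV[C]_n) : sqn (a *: v) = a^* * a * sqn v.
Proof. by rewrite /sqn adjmxZ -scalemxAl -scalemxAr !mxE mulrA. Qed.

Definition nrm n (v : 'cV[C]_n) : R := complex.Re (sqn v).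

Lemma nrmE n (v : 'cV[C]_n) : (nrm v)%:C = sqn v.
Proof. by rewrite /nrm RRe_real // ger0_real // sqn_ge0. Qed.

Lemma nrm_ge0 n (v : 'cV[C]_n) : 0 <= nrm v.
Proof. by rewrite -lecR nrmE sqn_ge0. Qed.


Lemma conjCR (x : R) : (x%:C)^* = x%:C.
Proof. exact: (conjc_real x). Qed.

Definition e0 N (hN : (0 < N)%N) : 'cV[C]_N := delta_mx (Ordinal hN) 0.

Lemma sqn_e0 N (hN : (0 < N)%N) : sqn (e0 hN) = 1.
Proof.
rewrite sqnE (bigD1 (Ordinal hN)) //= big1 => [|j /negbTE nj].
  by rewrite !mxE !eqxx /= conjC1 mulr1 addr0.
by rewrite !mxE nj /= mulr0.
Qed.

Definition nz N (hN : (0 < N)%N) (v : 'cV[C]_N) : 'cV[C]_N :=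
  if nrm v == 0 then e0 hN else ((Num.sqrt (nrm v))^-1)%:C *: v.

Lemma scale_sqrt (x : R) : 0 < x ->
  ((Num.sqrt x)^-1)%:C^* * ((Num.sqrt x)^-1)%:C * x%:C = 1.
Proof.
move=> x0; rewrite conjCR -!rmorphM -expr2 exprVn sqr_sqrtr ?ltW //.
by rewrite mulVf ?gt_eqF // rmorph1.
Qed.

Lemma unit_nz N (hN : (0 < N)%N) (v : 'cV[C]_N) : unit_vec (nz hN v).
Proof.
rewrite /unit_vec /nz; case: ifP => [_|/negbT nv]; first exact: sqn_e0.
have := sqnZ ((Num.sqrt (nrm v))^-1)%:C v; rewrite /sqn => ->.
by rewrite -/(sqn v) -nrmE scale_sqrt // lt_neqAle eq_sym nv nrm_ge0.
Qed.

Lemma projZ N a (v : 'cV[C]_N) : proj (a *: v) = (a * a^*) *: proj v.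
Proof. by rewrite /proj adjmxZ -scalemxAl -scalemxAr scalerA. Qed.

Lemma proj_nz N (hN : (0 < N)%N) (v : 'cV[C]_N) :
  proj v = (nrm v)%:C *: proj (nz hN v).
Proof.
rewrite /nz; case: ifP => [/eqP n0|/negbT nv].
  rewrite n0 scale0r.
  have -> : v = 0 by apply: sqn_eq0; rewrite -nrmE n0.
  by rewrite /proj mul0mx.
rewrite projZ scalerA mulrC [_ * _^*]mulrC scale_sqrt ?scale1r //.
by rewrite lt_neqAle eq_sym nv nrm_ge0.
Qed.

Lemma normalize N (hN : (0 < N)%N) k (w : 'I_k -> 'cV[C]_N) M :
  M = \sum_l proj (w l) -> \sum_l nrm (w l) = 1 ->
  pure_decomp M (fun l => nrm (w l)) (fun l => nz hN (w l)).
Proof.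
move=> -> s1; split => //.
- by move=> i; apply: nrm_ge0.
- by move=> i; apply: unit_nz.
- by apply: eq_bigr => l _; rewrite -proj_nz.
Qed.

Lemma nz_scale N (hN : (0 < N)%N) (v : 'cV[C]_N) : nrm v != 0 ->
  exists2 c, c != 0 & nz hN v = c *: v.
Proof.
move=> nv; rewrite /nz (negbTE nv); eexists => //.
rewrite (inj_eq (@complexI R)) invr_eq0 sqrtr_eq0 -ltNge lt_neqAle eq_sym nv.
exact: nrm_ge0.
Qed.


Lemma log2_ge0 (a : nat) : 0 <= log2 R a.
Proof.
rewrite /log2; apply: divr_ge0; last by apply: ln_ge0; rewrite ler1n.
case: a => [|a]; first by rewrite ln0.
by apply: ln_ge0; rewrite ler1n.
Qed.

Lemma log2_le (a b : nat) : (a <= b)%N -> log2 R a <= log2 R b.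
Proof.
move=> ab; rewrite /log2; apply: ler_wpM2r.
  by rewrite invr_ge0; apply: ln_ge0; rewrite ler1n.
case: a ab => [|a] ab.
  rewrite ln0 //; case: b ab => [|b] _; first by rewrite ln0.
  by apply: ln_ge0; rewrite ler1n.
rewrite ler_ln ?posrE ?ltr0n ?ler_nat //; exact: leq_trans ab.
Qed.

Lemma rc_scale n c (v : 'cV[C]_n) : (coh_rank (c *: v) <= coh_rank v)%N.
Proof.
apply: subset_leq_card; apply/fintype.subsetP => t; rewrite !inE mxE mulf_eq0 negb_or.
by case/andP.
Qed.

Lemma sr_le_rc m n (w : 'cV[C]_(m * n)) : (schmidt_rank w <= coh_rank w)%N.
Proof.
rewrite /schmidt_rank /coh_rank.
have -> : coef_mx w = \sum_t (w t 0 *: delta_mx (mxtens_unindex t).1 (mxtens_unindex t).2).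
  have dE (t : 'I_(m * n)) (i : 'I_m) (j : 'I_n) : delta_mx (mxtens_unindex t).1 (mxtens_unindex t).2 i j
                  = (t == mxtens_index (i, j))%:R :> C.
    rewrite mxE -[t in RHS]mxtens_unindexK.
    by rewrite (inj_eq (can_inj (@mxtens_indexK m n))) xpair_eqE !(eq_sym i) (eq_sym j).
  apply/matrixP => i j; rewrite summxE (bigD1 (mxtens_index (i, j))) //.
  rewrite big1 => [|t tn]; first by rewrite [in RHS]mxE dE eqxx mulr1 /coef_mx mxE; exact: (esym (addr0 _)).
  rewrite [LHS]mxE.
  by rewrite dE (negbTE tn) mulr0.
have H : (\rank (\sum_t (w t ord0 *: delta_mx (mxtens_unindex t).1 (mxtens_unindex t).2))%R <= \sum_(t < m * n) nat_of_bool (w t ord0 != 0%R))%N.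
  elim/big_ind2: _ => //; first by rewrite mxrank0.
    by move=> a A b B Ha Hb; apply: leq_trans (mxrank_add A B) (leq_add Ha Hb).
  move=> t _; case: eqP => [->|_]; first by rewrite scale0r mxrank0.
  by rewrite (leq_trans (mxrankS (scalemx_sub _ (submx_refl _)))) // mxrank_delta.
apply: (leq_trans H).
rewrite -sum1_card [in X in (_ <= X)%N]big_mkcond; apply: leq_sum => t _; rewrite inE.
by case: (w t 0 != 0).
Qed.


Lemma projE N (v : 'cV[C]_N) r s : proj v r s = v r 0 * (v s 0)^*.
Proof. by rewrite /proj mxE big_ord1 adjE. Qed.

Lemma incoh_col N (K : 'M[C]_N) :
  (forall delta : 'M[C]_N, is_diag_mx delta -> is_diag_mx (K *m delta *m adjmx K)) ->
  forall j r s, K r j != 0 -> K s j != 0 -> r = s.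
Proof.
move=> H j r s Kr Ks; apply/eqP; apply: contraLR isT => rs.
have D : is_diag_mx (proj (delta_mx j 0 : 'cV[C]_N)).
  apply/is_diag_mxP => a b ab; rewrite projE !mxE.
  case: (eqVneq a j) => [aj|]; last by rewrite /= mul0r.
  case: (eqVneq b j) => [bj|]; last by rewrite /= conjC0 mulr0.
  by move: ab; rewrite aj bj eqxx.
have /is_diag_mxP /(_ r s rs) := H _ D.
rewrite /proj mulmxA -(mulmxA (K *m _)) -adjmxM -colE -/(proj _) projE !mxE => /eqP.
by rewrite mulf_eq0 conjC_eq0 (negbTE Kr) (negbTE Ks).
Qed.

Lemma rc_K N (K : 'M[C]_N) (u : 'cV[C]_N) :
  (forall j r s, K r j != 0 -> K s j != 0 -> r = s) ->
  (coh_rank (K *m u) <= coh_rank u)%N.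
Proof.
move=> hK; rewrite /coh_rank.
pose g j := odflt j [pick r | K r j != 0].
have sub : [set r | (K *m u) r 0 != 0] \subset g @: [set j | u j 0 != 0].
  apply/fintype.subsetP => r; rewrite inE mxE => nz0.
  case: (pickP (fun j => K r j * u j 0 != 0)) => [j Hj|H0]; last first.
    by move: nz0; rewrite big1 ?eqxx // => j _; apply/eqP; rewrite -[_ == _]negbK H0.
  move: Hj; rewrite mulf_eq0 negb_or => /andP[Krj uj].
  apply/imsetP; exists j; first by rewrite inE.
  rewrite /g; case: pickP => [r' Hr'|H']; first by apply: hK Krj Hr'.
  by move: (H' r); rewrite Krj.
exact: leq_trans (subset_leq_card sub) (leq_imset_card _ _).
Qed.

Definition tv m n (a : 'cV[C]_m) (b : 'cV[C]_n) : 'cV[C]_(m * n) :=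
  \col_t (a (mxtens_unindex t).1 0 * b (mxtens_unindex t).2 0).

Lemma ket0E d (hd : (0 < d)%N) (b : 'I_d) j : ket0 R hd b j = (b == Ordinal hd)%:R.
Proof. by rewrite mxE ord1 eqxx andbT. Qed.

Lemma rc_tv d (hd : (0 < d)%N) (psi : 'cV[C]_d) :
  (coh_rank (tv psi (ket0 R hd)) <= coh_rank psi)%N.
Proof.
rewrite /coh_rank.
have sub : [set t | tv psi (ket0 R hd) t 0 != 0] \subset
   (fun a => mxtens_index (a, Ordinal hd)) @: [set j | psi j 0 != 0].
  apply/fintype.subsetP => t; rewrite inE mxE ket0E mulf_eq0 negb_or => /andP[pa].
  case: (eqVneq (mxtens_unindex t).2 (Ordinal hd)) => [eb _|neb]; last by rewrite /= mulr0n eqxx.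
  apply/imsetP; exists (mxtens_unindex t).1; first by rewrite inE.
  by rewrite -eb -surjective_pairing mxtens_unindexK.
exact: leq_trans (subset_leq_card sub) (leq_imset_card _ _).
Qed.


Lemma adj_tc m n (A : 'M[C]_(m, n)) : adjmx A = (A ^t*)%sesqui.
Proof. by apply/matrixP => i j; rewrite !mxE. Qed.

Lemma exists_decomp d (rho : 'M[C]_d) : is_state rho ->
  exists k (p : 'I_k -> R) (psi : 'I_k -> 'cV[C]_d), pure_decomp rho p psi.
Proof.
case=> herm psd tr1.
have nrm_rho : rho \is normalmx.
  by apply/normalmxP; rewrite -adj_tc herm.
have /orthomx_spectralP E := nrm_rho.
set P := spectralmx rho in E; set sp := spectral_diag rho in E.
have PU : P *m adjmx P = 1%:M by rewrite adj_tc; apply/unitarymxP/spectral_unitarymx.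
have {}E : rho = adjmx P *m diag_mx sp *m P.
  by rewrite {1}E invmx_unitary ?spectral_unitarymx // adj_tc.
pose v (j : 'I_d) : 'cV[C]_d := \col_a (P j a)^*.
have adjv j : adjmx (v j) = row j P.
  by apply/matrixP => a b; rewrite adjE !mxE conjCK.
have lam j : sp 0 j = (adjmx (v j) *m rho *m v j) 0 0.
  have D : diag_mx sp = P *m rho *m adjmx P.
    by rewrite E !mulmxA PU mul1mx -mulmxA PU mulmx1.
  have := congr1 (fun A : 'M[C]_d => A j j) D; rewrite /= [in LHS]mxE eqxx mulr1n => ->.
  rewrite adjv !mxE; apply: eq_bigr => b _; congr (_ * _).
    by rewrite !mxE; apply: eq_bigr => a _; rewrite !mxE.
  by rewrite adjE !mxE.
have lam_ge0 j : 0 <= sp 0 j by rewrite lam psd.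
pose p j := complex.Re (sp 0 j).
have pE j : (p j)%:C = sp 0 j by rewrite /p RRe_real // ger0_real.
exists d, p, v; split.
- by move=> j; rewrite -lecR pE.
- apply: (@complexI R); rewrite rmorph_sum /= rmorph1.
  under eq_bigr do rewrite pE.
  rewrite -mxtrace_diag -tr1 E mxtrace_mulC mulmxA PU mul1mx //.
- move=> j; rewrite /unit_vec adjv !mxE.
  have := congr1 (fun A : 'M[C]_d => A j j) PU; rewrite /= [in RHS]mxE eqxx mulr1n => <-.
  by rewrite mxE; apply: eq_bigr => a _; rewrite !mxE.
- apply/matrixP => a b; rewrite {1}E mul_mx_diag mxE summxE.
  apply: eq_bigr => j _; rewrite mxE [in RHS]mxE projE pE adjE !mxE conjCK.
  ring.
Qed.


Lemma sum_tens (V : nmodType) m n (F : 'I_(m * n) -> V) :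
  \sum_t F t = \sum_(i < m) \sum_(j < n) F (mxtens_index (i, j)).
Proof.
rewrite pair_big /= (reindex (@mxtens_index m n)) /=.
  by apply: eq_bigr => -[i j].
by exists (@mxtens_unindex m n) => t _; rewrite (mxtens_indexK, mxtens_unindexK).
Qed.

Lemma tens_proj m n (a : 'cV[C]_m) (b : 'cV[C]_n) :
  proj a *t proj b = proj (tv a b).
Proof.
apply/matrixP => i j; rewrite mxE !projE !mxE rmorphM /=; ring.
Qed.

Lemma tens_suml m n p q k (c : 'I_k -> C) (A : 'I_k -> 'M[C]_(m, n)) (B : 'M[C]_(p, q)) :
  (\sum_i c i *: A i) *t B = \sum_i c i *: (A i *t B).
Proof.
apply/matrixP => i j; rewrite mxE !summxE mulr_suml; apply: eq_bigr => l _.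
by rewrite !mxE mulrA.
Qed.

Lemma sqn_tv m n (a : 'cV[C]_m) (b : 'cV[C]_n) : sqn (tv a b) = sqn a * sqn b.
Proof.
rewrite !sqnE mulr_suml sum_tens; apply: eq_bigr => i _.
rewrite mulr_sumr; apply: eq_bigr => j _; rewrite !mxE mxtens_indexK /= rmorphM; ring.
Qed.

Lemma sqnK N k (K : 'I_k -> 'M[C]_N) (u : 'cV[C]_N) :
  \sum_(i < k) adjmx (K i) *m K i = 1%:M -> sqn u = 1 ->
  \sum_n nrm (K n *m u) = 1.
Proof.
move=> kraus u1; apply: (@complexI R); rewrite rmorph_sum /= rmorph1.
under eq_bigr do rewrite nrmE /sqn adjmxM mulmxA -(mulmxA (adjmx u)).
by rewrite -summxE -mulmx_suml -mulmx_sumr kraus mulmx1.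
Qed.


Lemma projK N (A : 'M[C]_N) (u : 'cV[C]_N) : A *m proj u *m adjmx A = proj (A *m u).
Proof. by rewrite /proj adjmxM !mulmxA. Qed.

Lemma apply_sum N k k0 (K : 'I_k -> 'M[C]_N) (c : 'I_k0 -> C) (u : 'I_k0 -> 'cV[C]_N) :
  \sum_(n < k) K n *m (\sum_(i < k0) c i *: proj (u i)) *m adjmx (K n)
  = \sum_(i < k0) \sum_(n < k) c i *: proj (K n *m u i).
Proof.
rewrite exchange_big /=; apply: eq_bigr => n _.
rewrite mulmx_sumr mulmx_suml; apply: eq_bigr => i _.
by rewrite -scalemxAr -scalemxAl projK.
Qed.

End Aux.
Theorem proposition5 (R : realType) (d : nat) (hd : (0 < d)%N)
  (rho : 'M[R[i]]_d) (k : nat) (K : 'I_k -> 'M[R[i]]_(d * d)) :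
  is_state rho -> incoherent_op K ->
  LE (apply_op K (rho *t proj (ket0 R hd))) <= LC rho.
Proof.
move=> st [kraus diagK].
set M := apply_op K _.
have colK n := incoh_col (diagK n).
have hN : (0 < d * d)%N by rewrite muln_gt0 hd.
have lbLE : has_lbound [set x : R | exists k (p : 'I_k -> R) (psi : 'I_k -> 'cV[R[i]]_(d * d)),
         pure_decomp M p psi /\ x = \sum_(i < k) p i * LE_pure (psi i)].
  exists 0 => x [k0 [p [psi [[p0 _ _ _] ->]]]].
  by apply: sumr_ge0 => i _; apply: mulr_ge0 => //; apply: log2_ge0.
apply: lb_le_inf.
  have [k0 [p [psi dec]]] := exists_decomp st.
  by exists (\sum_(i < k0) p i * LC_pure (psi i)); exists k0, p, psi.
move=> x [k0 [p [psi [[p0 p1 pu rhoE] ->]]]].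
pose e := ket0 R hd.
pose u i := tv (psi i) e.
pose W (t : 'I_(k0 * k)) : 'cV[R[i]]_(d * d) :=
  real_complex R (Num.sqrt (p (mxtens_unindex t).1)) *: (K (mxtens_unindex t).2 *m u (mxtens_unindex t).1).
have Wn t : nrm (W t) = p (mxtens_unindex t).1 * nrm (K (mxtens_unindex t).2 *m u (mxtens_unindex t).1).
  apply: (@complexI R); rewrite nrmE sqnZ rmorphM /= nrmE conjCR -rmorphM -expr2 sqr_sqrtr //.
have u1 i : sqn (u i) = 1.
  rewrite sqn_tv; have := pu i; rewrite /unit_vec -/(sqn _) => ->.
  by rewrite mul1r; apply: sqn_e0.
have sumW : \sum_t nrm (W t) = 1.
  rewrite sum_tens -p1; apply: eq_bigr => i _.
  under eq_bigr do rewrite Wn mxtens_indexK /=.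
  by rewrite -mulr_sumr sqnK // mulr1.
have ME : M = \sum_t proj (W t).
  rewrite sum_tens /M /apply_op rhoE tens_suml.
  under eq_bigr do under eq_bigr do rewrite tens_proj.
  rewrite apply_sum; apply: eq_bigr => i _; apply: eq_bigr => n _.
  rewrite /W mxtens_indexK /= projZ conjCR -rmorphM -expr2 sqr_sqrtr //.
have dec := normalize hN ME sumW.
have inLE : LE M <= \sum_t nrm (W t) * LE_pure (nz hN (W t)).
  rewrite /LE; apply: (ge_inf lbLE).
  by exists (k0 * k)%N, (fun t => nrm (W t)), (fun t => nz hN (W t)).
apply: le_trans inLE _.
rewrite sum_tens; apply: ler_sum => i _.
have -> : p i * LC_pure (psi i) = \sum_n nrm (W (mxtens_index (i, n))) * LC_pure (psi i).
  under eq_bigr do rewrite Wn mxtens_indexK /=.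
  by rewrite -mulr_suml -mulr_sumr sqnK // mulr1.
apply: ler_sum => n _.
case: (eqVneq (nrm (W (mxtens_index (i, n)))) 0) => [->|nz0]; first by rewrite !mul0r.
apply: ler_wpM2l; first exact: nrm_ge0.
have [c c0 ->] := nz_scale hN nz0.
rewrite /LE_pure /LC_pure; apply: log2_le.
apply: (leq_trans (sr_le_rc _)); apply: (leq_trans (rc_scale _ _)).
rewrite /W mxtens_indexK /=; apply: (leq_trans (rc_scale _ _)).
apply: (leq_trans (rc_K _ (colK n))); exact: rc_tv.
Qed.
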